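(* Let $L$ be a finite distributive lattice, let $m$ be the maximum size of an antichain in $\operatorname{Mi}(L)$, and put $Q_L(x)=\sum_{k=0}^m q_k(L)x^k$ and $D_L^-(x)=\sum_{k=0}^m d_k^-(L)x^k$. Then $Q_L(x)=D_L^-(1+x)$.
   Context: $\operatorname{Mi}(L)$ is the set of meet-irreducible elements of $L$, as a poset under the order of $L$. For a finite lattice $M$ and $k\ge0$, $q_k(M)$ is the number of convex sublattices (intervals) of $M$ isomorphic to the Boolean lattice $\mathbf{B}_k$ with $2^k$ elements. For $a\in M$, $\deg^-_M(a)$ is the number of elements of $M$ covering $a$, and $d_k^-(M)$ is the number of $a\in M$ with $\deg^-_M(a)=k$. *)

(* Defs.v *)
From mathcomp Require Import all_boot all_order all_algebra.
Set Implicit Arguments. Unset Strict Implicit. Unset Printing Implicit Defensive.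
Import Order.TTheory GRing.Theory.

Section Defs.
Local Open Scope order_scope.
Context {disp : Order.disp_t} {L : finDistrLatticeType disp}.

Definition covers (a b : L) : bool :=
  (a < b) && [forall c : L, ~~ ((a < c) && (c < b))].

(* meet-irreducible: a is not the top element (the empty meet), and
   a = x meet y implies a = x or a = y *)
Definition meet_irr (a : L) : bool :=
  [exists b : L, a < b] &&
  [forall x : L, forall y : L, (a == x `&` y) ==> ((a == x) || (a == y))].

Definition Mi : {set L} := [set a | meet_irr a].

Definition antichain (S : {set L}) : bool :=
  [forall x in S, forall y in S, (x != y) ==> ~~ (x <= y)].

Definition mwidth : nat :=
  \max_(S : {set L} | (S \subset Mi) && antichain S) #|S|.

(* the interval [a,b] is isomorphic (as a poset, hence as a lattice)
   to the Boolean lattice B_k = subsets of a k-element set *)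
Definition interval_boolean (k : nat) (a b : L) : bool :=
  [exists f : {ffun {set 'I_k} -> L},
     [forall A : {set 'I_k}, forall B : {set 'I_k},
        (f A <= f B) == (A \subset B)] &&
     [forall x : L, ((a <= x) && (x <= b)) == [exists A, f A == x]]].

Definition qk (k : nat) : nat :=
  #|[set p : L * L | (p.1 <= p.2) && interval_boolean k p.1 p.2]|.

Definition degm (a : L) : nat := #|[set b : L | covers a b]|.

Definition dk (k : nat) : nat := #|[set a : L | degm a == k]|.

Local Open Scope ring_scope.

Definition QL : {poly int} := \sum_(k < mwidth.+1) (qk k)%:R *: 'X^k.
Definition DL : {poly int} := \sum_(k < mwidth.+1) (dk k)%:R *: 'X^k.
End Defs.

(* Main.v *)
Require Import Defs.
From mathcomp Require Import all_boot all_order all_algebra.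
Set Implicit Arguments. Unset Strict Implicit. Unset Printing Implicit Defensive.
Import Order.TTheory.

Section Lat.
Local Open Scope order_scope.
Context {disp : Order.disp_t} {L : finDistrLatticeType disp}.
Implicit Types (a b c x y : L).

Lemma coversP a c : reflect (a < c /\ forall z, a < z -> z < c -> False) (covers a c).
Proof.
apply: (iffP andP) => [[ac /forallP H]|[ac H]]; split => //.
  by move=> z az zc; move: (H z); rewrite az zc.
by apply/forallP => z; apply/negP => /andP[] /H; auto.
Qed.

Lemma cover_meet a c x : covers a c -> a <= x -> ~~ (c <= x) -> c `&` x = a.
Proof.
move=> /coversP[ac H] ax ncx.
have h1 : a <= c `&` x by rewrite lexI ax (ltW ac).
have h2 : c `&` x < c.
  by rewrite lt_neqAle leIl andbT; apply: contra ncx => /eqP <-; apply: leIr.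
move: h1; rewrite le_eqVlt => /orP[/eqP <-//|h].
by case: (H _ h h2).
Qed.

Lemma covers_distinct_meet a b c : covers a b -> covers a c -> b != c -> b `&` c = a.
Proof.
move=> hb hc bc; apply: cover_meet => //.
  by case/coversP: hc => /ltW.
apply/negP => bc'; case/coversP: hc => _ H; case/coversP: hb => ab _.
by apply: (H b) => //; rewrite lt_neqAle bc bc'.
Qed.

Definition J a (s : seq L) := foldr (fun c acc => c `|` acc) a s.

Lemma J_ge a s : a <= J a s.
Proof. by elim: s => //= c s IH; rewrite (le_trans IH) // leUr. Qed.

Lemma J_mem a s c : c \in s -> c <= J a s.
Proof.
elim: s => //= d s IH; rewrite inE => /orP[/eqP->|/IH h]; first exact: leUl.
by rewrite (le_trans h) // leUr.
Qed.

Lemma J_lub a s y : a <= y -> {in s, forall c, c <= y} -> J a s <= y.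
Proof.
move=> ay; elim: s => //= c s IH H; rewrite leUx H ?mem_head //=.
by apply: IH => d ds; apply: H; rewrite inE ds orbT.
Qed.

Lemma J_meet_cover a s b : covers a b -> all (covers a) s -> b \notin s ->
  b `&` J a s = a.
Proof.
move=> hb; elim: s => /= [_ _|c s IH /andP[hc hs]].
  by apply: meet_r; case/coversP: hb => /ltW.
rewrite inE negb_or => /andP[bc bs].
by rewrite meetUr IH // (covers_distinct_meet hb hc) // joinxx.
Qed.

Lemma J_below a s x : all (covers a) s -> a <= x ->
  x `&` J a s <= J a [seq c <- s | c <= x].
Proof.
move=> hs ax; apply: (@le_trans _ _ (J a [seq c <- s | c <= x] `&` J a s)); last first.
  exact: leIl.
rewrite lexI leIr andbT.
elim: s hs => /= [_|c s IH /andP[hc hs]]; first exact: leIr.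
rewrite meetUr leUx; apply/andP; split.
  case: ifP => cx /=; first by rewrite (le_trans (leIr _ _)) // leUl.
  rewrite meetC (cover_meet hc ax) ?cx //; exact: J_ge.
case: ifP => _ /=; last exact: IH.
by rewrite (le_trans (IH hs)) // leUr.
Qed.


Lemma J_le a s y : (J a s <= y) = (a <= y) && all (fun c => c <= y) s.
Proof.
apply/idP/andP => [h|[ay /allP h]]; last exact: J_lub.
split; first exact: le_trans (J_ge a s) h.
by apply/allP => c cs; apply: le_trans (J_mem a cs) h.
Qed.

Definition Sb a b := [set c | covers a c && (c <= b)].
Definition Cv a := [set c | covers a c].

Section Fwd.
Variables (k : nat) (a b : L) (f : {set 'I_k} -> L).
Hypothesis hf1 : forall A B, (f A <= f B) = (A \subset B).
Hypothesis hf2 : forall x, ((a <= x) && (x <= b)) = [exists A, f A == x].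

Lemma f_inj A B : f A = f B -> A = B.
Proof.
by move=> e; apply/eqP; rewrite eqEsubset -!hf1 e lexx.
Qed.

Lemma f_surj x : a <= x -> x <= b -> exists A, f A = x.
Proof. by move=> ax xb; move: (hf2 x); rewrite ax xb => /esym/existsP[A /eqP]; exists A. Qed.

Lemma f_in A : a <= f A /\ f A <= b.
Proof. by have := hf2 (f A); rewrite (_ : [exists _, _] = true) => [/andP//|]; apply/existsP; exists A. Qed.

Lemma f0 : f set0 = a.
Proof.
have [h1 h2] := f_in set0.
have [A eA] := f_surj (lexx a) (le_trans h1 h2).
apply: le_anti; rewrite h1 andbT.
by rewrite -eA hf1 sub0set.
Qed.

Lemma fT : f setT = b.
Proof.
have [h1 h2] := f_in setT.
have [A eA] := f_surj (le_trans h1 h2) (lexx b).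
apply: le_anti; rewrite h2 /=.
by rewrite -eA hf1 subsetT.
Qed.

Lemma f1cov i : covers a (f [set i]).
Proof.
apply/coversP; split.
  rewrite -f0 lt_neqAle hf1 sub0set andbT; apply/negP => /eqP /f_inj /setP /(_ i).
  by rewrite !inE eqxx.
move=> z az zi.
have [hz1 hz2] := f_in [set i].
have [C eC] := f_surj (ltW az) (le_trans (ltW zi) hz2).
move: az zi; rewrite -eC -f0 !lt_neqAle !hf1 => /andP[n0 _] /andP[n1].
by rewrite subset1 => /orP[/eqP e|/eqP e]; [rewrite e eqxx in n1|rewrite e eqxx in n0].
Qed.

Lemma Sb_char c : (c \in Sb a b) = (c \in [set f [set i] | i : 'I_k]).
Proof.
apply/idP/imsetP => [|[i _ ->]]; last by rewrite inE f1cov (f_in _).2.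
rewrite inE => /andP[/coversP[ac H] cb].
have [C eC] := f_surj (ltW ac) cb.
have : C != set0 by apply: contraTneq ac => e; rewrite -eC e f0 ltxx.
case/set0Pn => i iC; exists i => //.
have le1 : f [set i] <= c by rewrite -eC hf1 sub1set.
have [/coversP[ai _] _] := (f1cov i, 0).
move: le1; rewrite le_eqVlt => /orP[/eqP//|lt]; by case: (H _ ai lt).
Qed.

Lemma Sb_card : #|Sb a b| = k.
Proof.
rewrite (_ : Sb a b = [set f [set i] | i : 'I_k]); last by apply/setP => c; rewrite Sb_char.
rewrite card_imset ?card_ord // => i j /f_inj; exact: set1_inj.
Qed.

Lemma Sb_sub : Sb a b \subset Cv a.
Proof. by apply/subsetP => c; rewrite !inE => /andP[]. Qed.

Lemma Sb_lub y : a <= y -> {in Sb a b, forall c, c <= y} -> b <= y.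
Proof.
move=> ay H.
have [hb _] := f_in setT; rewrite fT in hb.
have aby : a <= b `&` y by rewrite lexI hb ay.
have [C eC] := f_surj aby (leIl b y).
have CT : C = setT.
  apply/eqP; rewrite eqEsubset subsetT /=; apply/subsetP => i _.
  rewrite -sub1set -hf1 eC lexI (f_in _).2 H //.
  by rewrite Sb_char; apply/imsetP; exists i.
by move: eC; rewrite CT fT => e; rewrite {1}e leIr.
Qed.
End Fwd.

Lemma ib_unpack k a b : interval_boolean k a b ->
  exists f : {set 'I_k} -> L, (forall A B, (f A <= f B) = (A \subset B)) /\
     (forall x, ((a <= x) && (x <= b)) = [exists A, f A == x]).
Proof.
case/existsP => f /andP[/forallP H1 /forallP H2]; exists f; split.
  by move=> A B; move/forallP: (H1 A) => /(_ B) /eqP.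
by move=> x; apply/eqP; apply: H2.
Qed.

Lemma ib_Sb_card k a b : interval_boolean k a b -> #|Sb a b| = k.
Proof. by case/ib_unpack => f [h1 h2]; apply: Sb_card h1 h2. Qed.

Lemma ib_ab k a b : interval_boolean k a b -> a <= b.
Proof. by case/ib_unpack => f [h1 h2]; have [h3 h4] := f_in h2 set0; apply: le_trans h4. Qed.

Lemma ib_inj k a b b' : interval_boolean k a b -> interval_boolean k a b' ->
  Sb a b = Sb a b' -> b = b'.
Proof.
move=> hb hb' e; apply: le_anti; apply/andP; split.
  case/ib_unpack: hb => f [h1 h2]; apply: (Sb_lub h1 h2); first exact: ib_ab hb'.
  by move=> c; rewrite e inE => /andP[].
case/ib_unpack: hb' => f [h1 h2]; apply: (Sb_lub h1 h2); first exact: ib_ab hb.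
by move=> c; rewrite -e inE => /andP[].
Qed.

Section Bwd.
Variables (k : nat) (a : L) (S : {set L}).
Hypothesis hS : S \subset Cv a.
Hypothesis hk : #|S| = k.

Let g (i : 'I_k) := nth a (enum S) i.
Let sz : size (enum S) = k. Proof. by rewrite -cardE. Qed.

Let g_in i : g i \in S.
Proof. by rewrite -mem_enum /g mem_nth // sz. Qed.

Let g_inj : injective g.
Proof.
move=> i j e; apply: val_inj => /=; apply/eqP.
by rewrite -(nth_uniq a _ _ (enum_uniq (mem S))) ?sz //; apply/eqP.
Qed.

Let g_surj c : c \in S -> exists i, c = g i.
Proof.
move=> cS; have hi : (index c (enum S) < k)%N by rewrite -[X in (_ < X)%N]sz index_mem mem_enum.
by exists (Ordinal hi); rewrite /g /= nth_index // mem_enum.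
Qed.

Let covS : all (covers a) (enum S).
Proof. by apply/allP => c; rewrite mem_enum => /(subsetP hS); rewrite inE. Qed.

Let cov c : c \in S -> covers a c.
Proof. by move/(subsetP hS); rewrite inE. Qed.

Let f (A : {set 'I_k}) := J a [seq g i | i <- enum A].
Let b := J a (enum S).

Let hf1 A B : (f A <= f B) = (A \subset B).
Proof.
apply/idP/idP => [h|sAB]; last first.
  rewrite J_le J_ge /=; apply/allP => c /mapP[i]; rewrite mem_enum => iA ->.
  by apply: J_mem; apply: map_f; rewrite mem_enum (subsetP sAB).
apply/subsetP => i iA; apply/negPn/negP => iB.
have gi : g i <= f B by apply: le_trans h; apply: J_mem; apply: map_f; rewrite mem_enum.
have : g i `&` f B = a.
  apply: J_meet_cover; first exact: cov.
    by apply/allP => c /mapP[j _ ->]; apply: cov.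
  by apply/mapP => -[j]; rewrite mem_enum => jB /g_inj e; rewrite e jB in iB.
rewrite meet_l // => e; case/coversP: (cov (g_in i)); by rewrite e ltxx.
Qed.

Let hf2 x : ((a <= x) && (x <= b)) = [exists A, f A == x].
Proof.
apply/idP/existsP => [/andP[ax xb]|[A /eqP <-]]; last first.
  rewrite J_ge /= J_le J_ge /=; apply/allP => c /mapP[i _ ->].
  by apply: J_mem; rewrite mem_enum.
exists [set i | g i <= x]; apply/eqP; apply: le_anti; apply/andP; split.
  rewrite J_le ax /=; apply/allP => c /mapP[i]; by rewrite mem_enum inE => ? ->.
have xxb : x <= x `&` b by rewrite (meet_l xb).
apply: le_trans xxb _; apply: le_trans (J_below covS ax) _.
rewrite J_le J_ge /=; apply/allP => c; rewrite mem_filter mem_enum => /andP[cx cS].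
have [i ei] := g_surj cS; apply: J_mem; rewrite ei; apply: map_f.
by rewrite mem_enum inE -ei.
Qed.

Lemma bwd : exists b, interval_boolean k a b && (Sb a b == S).
Proof.
exists b; apply/andP; split.
  apply/existsP; exists (finfun f); apply/andP; split.
    by apply/forallP => A; apply/forallP => B; rewrite !ffunE hf1.
  by apply/forallP => x; rewrite hf2; apply/eqP; apply: eq_existsb => A; rewrite ffunE.
apply/eqP/setP => c; rewrite inE; apply/andP/idP => [[cc cb]|cS]; last first.
  by split; [exact: cov | apply: J_mem; rewrite mem_enum].
apply/negPn/negP => ncS.
have : c `&` b = a by apply: J_meet_cover => //; rewrite mem_enum.
by rewrite meet_l // => e; case/coversP: cc; rewrite e ltxx.
Qed.
End Bwd.

Lemma card_ib k a : #|[set b | interval_boolean k a b]| = 'C(degm a, k).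
Proof.
have E : [set Sb a b | b in [set b | interval_boolean k a b]] =
         [set S : {set L} | S \subset [set c | covers a c] & #|S| == k].
  apply/setP => S; rewrite inE; apply/imsetP/andP => [[b]|[sS /eqP kS]].
    rewrite inE => hb ->; split; [exact: Sb_sub | by rewrite (ib_Sb_card hb)].
  have [b /andP[hb /eqP e]] := bwd sS kS.
  by exists b; rewrite ?inE.
rewrite /degm -cards_draws -E card_in_imset //.
by move=> b b'; rewrite !inE; apply: ib_inj.
Qed.

Section Width.
Variable a : L.

Definition Pm c m := [&& a <= m, ~~ (c <= m) & [forall x, (m < x) ==> (c <= x)]].

Definition meas x := #|[set z : L | z <= x]|.
Lemma meas_lt x y : x < y -> (meas x < meas y)%N.
Proof.
move=> xy; rewrite /meas; apply: proper_card; apply/properP; split.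
  by apply/subsetP => z; rewrite !inE => zx; apply: le_trans zx (ltW xy).
by exists y; rewrite !inE ?lexx // lt_geF.
Qed.

Lemma Pm_ex c : covers a c -> exists m, Pm c m.
Proof.
case/coversP => ac _.
have Pa : (fun x => (a <= x) && ~~ (c <= x)) a by rewrite lexx /= lt_geF.
case: (@arg_maxnP _ a (fun x => (a <= x) && ~~ (c <= x)) meas Pa).
move=> m /andP[am cm] H; exists m; rewrite /Pm am cm /=.
apply/forallP => x; apply/implyP => mx; apply/negPn/negP => cx.
have := H x; rewrite (le_trans am (ltW mx)) cx => /(_ isT).
move=> h; have := meas_lt mx; rewrite ltnNge; move: h => /= -> //.
Qed.

Definition mc c := odflt a [pick m | Pm c m].

Lemma mcP c : covers a c -> Pm c (mc c).
Proof.
move=> hc; rewrite /mc; case: pickP => [m //|H].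
by have [m hm] := Pm_ex hc; rewrite H in hm.
Qed.

Lemma mc_other c c' : covers a c -> covers a c' -> c != c' -> c' <= mc c.
Proof.
move=> hc hc' cc'; have /and3P[am ncm /forallP H] := mcP hc.
apply/negPn/negP => nc'm.
have lt : mc c < mc c `|` c'.
  by rewrite lt_neqAle leUl andbT; apply: contra nc'm => /eqP ->; apply: leUr.
have := implyP (H _) lt => cle.
have : c `&` (mc c `|` c') = a.
  by rewrite meetUr (cover_meet hc am ncm) (covers_distinct_meet hc hc' cc') joinxx.
rewrite meet_l // => e; case/coversP: hc; by rewrite e ltxx.
Qed.

Lemma mc_irr c : covers a c -> meet_irr (mc c).
Proof.
move=> hc; have /and3P[am ncm /forallP H] := mcP hc.
apply/andP; split.
  apply/existsP; exists (mc c `|` c).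
  by rewrite lt_neqAle leUl andbT; apply: contra ncm => /eqP ->; apply: leUr.
apply/forallP => x; apply/forallP => y; apply/implyP => /eqP e.
apply/negPn/negP; rewrite negb_or => /andP[nx ny].
have hx : mc c < x by rewrite lt_neqAle nx e leIl.
have hy : mc c < y by rewrite lt_neqAle ny e leIr.
move: ncm; rewrite e lexI (implyP (H _) hx) (implyP (H _) hy).
done.
Qed.

Lemma deg_le : (degm a <= @mwidth disp L)%N.
Proof.
have inj : {in Cv a &, injective mc}.
  move=> c c'; rewrite !inE => hc hc' e; apply/eqP; apply/negPn/negP => cc'.
  have := mc_other hc' hc; rewrite eq_sym cc' -e => /(_ isT).
  by have /and3P[_ /negP ? _] := mcP hc.
rewrite /degm -/(Cv a) -(card_in_imset inj) /mwidth.
apply: (@leq_bigmax_cond _ (fun S : {set L} => (S \subset Mi) && antichain S) (fun S => #|S|)); apply/andP; split.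
  by apply/subsetP => m /imsetP[c]; rewrite !inE => hc ->; apply: mc_irr.
apply/forall_inP => x /imsetP[c]; rewrite inE => hc ->.
apply/forall_inP => y /imsetP[c']; rewrite inE => hc' ->.
apply/implyP => ne; have cc' : c != c' by apply: contra ne => /eqP ->.
apply/negP => le.
have := mc_other hc hc' cc'; move=> h.
have /and3P[_ /negP nc _] := mcP hc'.
by apply: nc; apply: le_trans le.
Qed.
End Width.

End Lat.

Import GRing.Theory.

Lemma qk_sum (disp : Order.disp_t) (L : finDistrLatticeType disp) k :
  @qk disp L k = (\sum_(a : L) 'C(degm a, k))%N.
Proof.
rewrite /qk; set S := (X in #|X|).
transitivity (\sum_(a : L) \sum_(b : L) (if (a, b) \in S then 1 else 0))%N.
  rewrite pair_bigA -sum1_card big_mkcond /=; apply: eq_bigr => -[a b] //.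
apply: eq_bigr => a _; rewrite -card_ib -sum1_card [in RHS]big_mkcond /=.
apply: eq_bigr => b _; rewrite !inE /=.
by case: (boolP (interval_boolean k a b)) => h; rewrite ?andbF // (ib_ab h).
Qed.

Local Open Scope ring_scope.

Lemma QL_eq (disp : Order.disp_t) (L : finDistrLatticeType disp) :
  @QL disp L = \sum_(a : L) ('X + 1) ^+ degm a.
Proof.
rewrite /QL.
under eq_bigr => k _ do rewrite qk_sum natr_sum scaler_suml.
rewrite exchange_big /=; apply: eq_bigr => a _.
rewrite exprD1n (@big_ord_widen _ 0 +%R (degm a).+1 (@mwidth disp L).+1 (fun i => 'X ^+ i *+ 'C(degm a, i))) ?ltnS ?deg_le //.
rewrite [RHS]big_mkcond /=; apply: eq_bigr => i _.
rewrite scaler_nat; case: ifP => // h.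
by rewrite bin_small ?mulr0n // ltnNge -ltnS h.
Qed.

Lemma DL_eq (disp : Order.disp_t) (L : finDistrLatticeType disp) :
  (@DL disp L) \Po ('X + 1) = \sum_(a : L) ('X + 1) ^+ degm a.
Proof.
rewrite /DL linear_sum /=.
pose p (a : L) : 'I_(@mwidth disp L).+1 := Ordinal (deg_le a : (degm a < (@mwidth disp L).+1)%N).
rewrite [RHS](partition_big p xpredT) //=; apply: eq_bigr => k _.
rewrite comp_polyZ comp_Xn_poly scaler_nat /dk -sumr_const.
apply: eq_big => [a|a]; first by rewrite inE -val_eqE.
by rewrite inE => /eqP ->.
Qed.

Unset Implicit Arguments.

Theorem corollary8 (disp : Order.disp_t) (L : finDistrLatticeType disp) :
  @QL disp L = (@DL disp L) \Po ('X + 1).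
Proof. by rewrite QL_eq DL_eq. Qed.
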